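(* Let $\mathcal B$ be a BMC with $\mathbf c^*_q<\infty$ for all $q\in\mathcal T$, and consider the Q-learning process with learning rates $\lambda_i\in[0,1]$ satisfying $\sum_{i=0}^\infty\lambda_i=\infty$, a fixed selection distribution with $p_q\ge p_{\min}>0$ for all $q$, and initial value $Q_0=\kappa\mathbf c^*$ for a scalar $\kappa\ge0$. Then $\lim_{i\to\infty}\mathbb E Q_i=\mathbf c^*$.
   Context: A branching Markov chain (BMC) is $\mathcal B=(\mathcal T,p,c)$ with $\mathcal T$ a finite set of types, $p(q)$ for each $q\in\mathcal T$ a probability distribution with finite support over finite lists $\mathcal T^*$ of types (the offspring distribution), and $c:\mathcal T\to\mathbb R_{>0}$ a strictly positive cost. For a list $\alpha$, $|\alpha|$ is its length and $\alpha_i$ its $i$-th element. $\mathbf c^*_q\in[0,\infty]$ denotes the expected total cost until extinction starting from the single entity $q$; equivalently $\mathbf c^*$ is the least fixed point in $[0,\infty]^{\mathcal T}$ of $F(\mathbf x)_q=c(q)+\sum_\alpha p(q)(\alpha)\sum_{i=1}^{|\alpha|}\mathbf x_{\alpha_i}$. Q-learning process for a BMC: given deterministic learning rates $\lambda_i\in[0,1]$, a probability distribution $(p_q)_{q\in\mathcal T}$ and an initial vector $Q_0\in\mathbb R_{\ge0}^{\mathcal T}$, at each step $i=0,1,2,\dots$ a type $q_i$ is selected with probability $p_{q_i}$ independently of all previous randomness, then a list $\beta^i$ is drawn from $p(q_i)$ independently, and $Q_{i+1}(q_i)=(1-\lambda_i)Q_i(q_i)+\lambda_i\big(c(q_i)+\sum_{j=1}^{|\beta^i|}Q_i(\beta^i_j)\big)$,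 while $Q_{i+1}(q)=Q_i(q)$ for $q\ne q_i$. $\mathbb E Q_i$ is the componentwise expectation. *)

(* Defs.v *)
From HB Require Import structures.
From mathcomp Require Import all_boot all_order all_algebra.
From mathcomp Require Import all_classical all_reals all_analysis.
Set Implicit Arguments. Unset Strict Implicit. Unset Printing Implicit Defensive.
Import Order.TTheory GRing.Theory Num.Theory.
Local Open Scope ring_scope.

Section BMC.
Variables (R : realType) (T : finType).

(* A BMC: offspring distribution p q given as a finite weighted list of
   (offspring list, probability); cost c. *)
Definition offspring_distr (p : T -> seq (seq T * R)) :=
  forall q, (forall a, a \in p q -> 0 <= a.2) /\ \sum_(a <- p q) a.2 = 1.

Definition cost_pos (c : T -> R) := forall q, 0 < c q.

Definition Fop (p : T -> seq (seq T * R)) (c : T -> R) (x : T -> \bar R) (q : T)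
  : \bar R :=
  ((c q)%:E + \sum_(a <- p q) (a.2)%:E * \sum_(t <- a.1) x t)%E.

Definition is_cstar p c (cs : T -> \bar R) :=
  [/\ (forall q, (0 <= cs q)%E),
      (forall q, Fop p c cs q = cs q) &
      (forall y : T -> \bar R, (forall q, (0 <= y q)%E) ->
         (forall q, Fop p c y q = y q) -> forall q, (cs q <= y q)%E)].

Definition qupdate (c : T -> R) (l : R) (Q : T -> R) (q : T) (b : seq T)
  : T -> R :=
  fun r => if r == q then (1 - l) * Q q + l * (c q + \sum_(t <- b) Q t)
           else Q r.

(* Exact law of Q_i as a finite mixture (weight, value) over all histories
   (q_0, beta^0, ..., q_{i-1}, beta^{i-1}). *)
Fixpoint qlaw (p : T -> seq (seq T * R)) (c : T -> R) (ps : T -> R)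
  (lam : nat -> R) (Q0 : T -> R) (i : nat) : seq (R * (T -> R)) :=
  match i with
  | 0 => [:: (1, Q0)]
  | i'.+1 =>
      flatten [seq flatten [seq [seq (wQ.1 * ps q * a.2,
                                       qupdate c (lam i') wQ.2 q a.1)
                                 | a <- p q] | q <- enum T]
              | wQ <- qlaw p c ps lam Q0 i']
  end.

Definition EQ p c ps lam Q0 (i : nat) (q : T) : R :=
  \sum_(wQ <- qlaw p c ps lam Q0 i) wQ.1 * wQ.2 q.

End BMC.

(* Main.v *)
Require Import Defs.
From HB Require Import structures.
From mathcomp Require Import all_boot all_order all_algebra.
From mathcomp Require Import all_classical all_reals all_analysis.
From mathcomp Require Import ring lra.
Set Implicit Arguments. Unset Strict Implicit. Unset Printing Implicit Defensive.
Import Order.TTheory GRing.Theory Num.Theory numFieldNormedType.Exports.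
Local Open Scope classical_set_scope.
Local Open Scope ring_scope.

Section Alg.
Variables (R : realType) (T : finType) (p : T -> seq (seq T * R)) (c : T -> R)
  (ps : T -> R) (lam : nat -> R) (Q0 : T -> R).

Definition SS i (phi : (T -> R) -> R) :=
  \sum_(wQ <- qlaw p c ps lam Q0 i) wQ.1 * phi wQ.2.

Lemma SS_step i phi : SS i.+1 phi =
  SS i (fun Q => \sum_(q : T) ps q * \sum_(a <- p q) a.2 *
                   phi (qupdate c (lam i) Q q a.1)).
Proof.
rewrite /SS /= big_flatten /= big_map; apply: eq_bigr => wQ _.
rewrite big_flatten /= big_map -big_enum /= big_distrr /=; apply: eq_bigr => q _.
rewrite big_map mulrA big_distrr /=; apply: eq_bigr => a _.
by rewrite !mulrA.
Qed.

Lemma SS_add i f g : SS i (fun Q => f Q + g Q) = SS i f + SS i g.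
Proof. by rewrite /SS -big_split /=; apply: eq_bigr => x _; rewrite mulrDr. Qed.

Lemma SS_scale i k f : SS i (fun Q => k * f Q) = k * SS i f.
Proof. by rewrite /SS big_distrr /=; apply: eq_bigr => x _; rewrite mulrCA. Qed.

Lemma SS_sum i (I : Type) (s : seq I) (F : I -> (T -> R) -> R) :
  SS i (fun Q => \sum_(x <- s) F x Q) = \sum_(x <- s) SS i (F x).
Proof.
rewrite /SS (eq_bigr (fun wQ => \sum_(x <- s) wQ.1 * F x wQ.2)); last first.
  by move=> wQ _; rewrite big_distrr.
by rewrite exchange_big.
Qed.

Lemma SS_ext i (f g : (T -> R) -> R) : (forall Q, f Q = g Q) -> SS i f = SS i g.
Proof. by move=> h; rewrite /SS; apply: eq_bigr => x _; rewrite h. Qed.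

Hypothesis hp : offspring_distr p.
Hypothesis hps : \sum_(q : T) ps q = 1.

Lemma SS_one i : SS i (fun _ => 1) = 1.
Proof.
elim: i => [|i IH]; first by rewrite /SS /= big_seq1 mulr1.
rewrite SS_step -[RHS]IH; apply: SS_ext => Q.
rewrite (eq_bigr ps) ?hps // => q _.
have [_ hs] := hp q.
by rewrite (eq_bigr (fun a => a.2)) ?hs ?mulr1 // => a _; rewrite ?mulr1.
Qed.

Definition G (x : T -> R) (q : T) := \sum_(a <- p q) a.2 * \sum_(t <- a.1) x t.

Lemma EQ_step i r : EQ p c ps lam Q0 i.+1 r =
  EQ p c ps lam Q0 i r + ps r * lam i *
   (c r + G (EQ p c ps lam Q0 i) r - EQ p c ps lam Q0 i r).
Proof.
have -> : EQ p c ps lam Q0 i.+1 r = SS i.+1 (fun Q => Q r) by [].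
rewrite SS_step.
rewrite (@SS_ext i _ (fun Q => Q r + ps r * lam i * (c r * 1 + G Q r - Q r))); last first.
  move=> Q.
  rewrite (eq_bigr (fun q => ps q * Q r + (if q == r then
       ps r * lam i * (c r * 1 + G Q r - Q r) else 0))); last first.
    move=> q _; rewrite /qupdate.
    case: eqP => [<-|/eqP/negbTE hne].
      have [_ hs] := hp r.
      rewrite (eq_bigr (fun a => a.2 * Q r + lam i * (a.2 * c r + a.2 * \sum_(t <- a.1) Q t - a.2 * Q r))); last first.
        by move=> a _; ring.
      rewrite big_split /= -big_distrl /= hs -big_distrr /= !big_split /= -!big_distrl /= hs /G.
      rewrite eqxx sumrN -big_distrl /= hs; ring.
    rewrite (eq_bigr (fun a => a.2 * Q r)); last by [].
    have [_ hs] := hp q.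
    by rewrite -big_distrl /= hs mul1r eq_sym hne addr0.
  rewrite big_split /= -big_distrl /= hps mul1r -big_mkcond /= big_pred1_eq //.
rewrite (@SS_ext i _ (fun Q => ((Q r + (ps r * lam i * c r) * 1) + (ps r * lam i) * G Q r) + (- (ps r * lam i)) * Q r)); last by move=> Q; ring.
rewrite !SS_add !SS_scale SS_one.
have -> : SS i (fun Q => G Q r) = G (EQ p c ps lam Q0 i) r.
  rewrite /G SS_sum; apply: eq_bigr => a _.
  by rewrite SS_scale SS_sum.
rewrite /EQ /SS; ring.
Qed.

End Alg.

Section G.
Variables (R : realType) (T : finType) (p : T -> seq (seq T * R)).
Hypothesis hp : offspring_distr p.

Lemma G_mono (x y : T -> R) q : (forall t, `|x t| <= y t) -> `|G p x q| <= G p y q.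
Proof.
move=> hxy; rewrite /G; apply: le_trans (ler_norm_sum _ _ _) _.
have [h0 _] := hp q.
rewrite big_seq_cond [X in _ <= X]big_seq_cond; apply: ler_sum => a /andP [ha _].
rewrite normrM (ger0_norm (h0 a ha)); apply: ler_wpM2l; first exact: h0.
apply: le_trans (ler_norm_sum _ _ _) _; apply: ler_sum => t _; exact: hxy.
Qed.

Lemma G_scale (y : T -> R) k q : G p (fun t => k * y t) q = k * G p y q.
Proof.
rewrite /G big_distrr; apply: eq_bigr => a _.
by rewrite -big_distrr /= mulrCA.
Qed.

Lemma G_sub (x y : T -> R) q : G p (fun t => x t - y t) q = G p x q - G p y q.
Proof.
rewrite /G -sumrB; apply: eq_bigr => a _.
by rewrite sumrB mulrBr.
Qed.

Lemma G_ge0 (y : T -> R) q : (forall t, 0 <= y t) -> 0 <= G p y q.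
Proof.
move=> hy; rewrite /G big_seq; apply: sumr_ge0 => a ha.
have [h0 _] := hp q.
by apply: mulr_ge0; [exact: h0|apply: sumr_ge0].
Qed.

End G.

Theorem lemma4 (R : realType) (T : finType)
  (p : T -> seq (seq T * R)) (c : T -> R) (cs : T -> \bar R)
  (lam : nat -> R) (ps : T -> R) (pmin kappa : R) :
  offspring_distr p -> cost_pos c ->
  is_cstar p c cs -> (forall q, (cs q < +oo)%E) ->
  (forall i, 0 <= lam i <= 1) ->
  (fun n => \sum_(0 <= k < n) lam k) @ \oo --> +oo ->
  0 < pmin -> (forall q, pmin <= ps q) -> \sum_(q : T) ps q = 1 ->
  0 <= kappa ->
  forall q, (fun i => EQ p c ps lam (fun r => kappa * fine (cs r)) i q) @ \oo
              --> fine (cs q).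
Proof.
move=> hp hc [cs0 csfix _] csfin hlam hsum hpmin hpsmin hps hk q.
set cs' := fun r => fine (cs r).
have hcs' : forall r, 0 <= cs' r by move=> r; exact: fine_ge0.
have csE : cs = fun r => (cs' r)%:E.
  apply: funext => r; rewrite /cs' fineK // ge0_fin_numE //.
have hfix : forall r, cs' r = c r + G p cs' r.
  move=> r; have := csfix r; rewrite csE /Fop.
  under eq_bigr do rewrite sumEFin -EFinM.
  by rewrite sumEFin -EFinD => -[->].
have hcpos : forall r, 0 < cs' r.
  move=> r; rewrite hfix; apply: ltr_wpDr; [exact: G_ge0|exact: hc].
have ps1 : forall r, ps r <= 1.
  move=> r; rewrite -hps (bigD1 r) //= lerDl; apply: sumr_ge0 => i _.
  exact: le_trans (ltW hpmin) (hpsmin i).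
have pmin1 : pmin <= 1 by apply: le_trans (hpsmin q) (ps1 q).
set S := \sum_r cs' r / c r.
have S0 : 0 <= S by apply: sumr_ge0 => r _; apply: divr_ge0; [|apply: ltW].
set eps := 1 / (1 + S).
have eps0 : 0 < eps by apply: divr_gt0 => //; lra.
have eps1 : eps <= 1 by rewrite /eps ler_pdivrMr; lra.
have hepsc : forall r, eps * cs' r <= c r.
  move=> r; have hr : cs' r / c r <= S.
    rewrite /S (bigD1 r) //= lerDl; apply: sumr_ge0 => i _; apply: divr_ge0; [exact: hcs'|apply: ltW; exact: hc].
  have := hc r => hcr.
  have hS : 0 < 1 + S by lra.
  have -> : eps * cs' r = cs' r / (1 + S) by rewrite /eps; field; lra.
  rewrite ler_pdivrMr // -ler_pdivrMl // mulrC; lra.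
set a := pmin * eps.
have a0 : 0 < a by apply: mulr_gt0.
have a1 : a <= 1 by rewrite /a; nra.
set pi := fun n => \prod_(0 <= k < n) (1 - a * lam k).
have fac0 : forall k, 0 <= 1 - a * lam k.
  move=> k; have /andP [l0 l1] := hlam k; nra.
have pi0 : forall n, 0 <= pi n by move=> n; apply: prodr_ge0 => k _; exact: fac0.
have piS : forall n, pi n.+1 = pi n * (1 - a * lam n).
  by move=> n; rewrite /pi big_nat_recr.
have s0 : forall n, 0 <= \sum_(0 <= k < n) lam k.
  by move=> n; apply: sumr_ge0 => k _; have /andP [] := hlam k.
have pis : forall n, pi n * (1 + a * \sum_(0 <= k < n) lam k) <= 1.
  elim=> [|n IH]; first by rewrite /pi !big_geq // mul1r mulr0 addr0.
  rewrite piS big_nat_recr //=.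
  have /andP [l0 l1] := hlam n.
  have := s0 n; have := pi0 n; move: IH.
  set s := \sum_(0 <= k < n) lam k; set P := pi n.
  move=> IH P0 sn0.
  have h : 0 <= P * (a * lam n) * (a * s + a * lam n).
    have a0' := ltW a0.
    apply: mulr_ge0; first by apply: mulr_ge0 => //; apply: mulr_ge0.
    by apply: addr_ge0; apply: mulr_ge0.
  nra.
set E := fun n r => EQ p c ps lam (fun r => kappa * fine (cs r)) n r.
have bound : forall n r, `|E n r - cs' r| <= `|kappa - 1| * pi n * cs' r.
  elim=> [|m IH] r.
    rewrite /E /EQ /= big_seq1 mul1r /pi big_geq // mulr1 -/(cs' r).
    by rewrite -{1}(mul1r (cs' r)) -mulrBl normrM (ger0_norm (hcs' r)).
  have /andP [l0 l1] := hlam m.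
  have hx0 : 0 <= ps r * lam m.
    by apply: mulr_ge0 => //; exact: le_trans (ltW hpmin) (hpsmin r).
  have hx1 : ps r * lam m <= 1.
    by have := ps1 r; have := hpsmin r; nra.
  have -> : E m.+1 r = E m r + ps r * lam m * (c r + G p (E m) r - E m r).
    by rewrite /E EQ_step.
  set d := fun t => E m t - cs' t.
  have hG : G p d r = G p (E m) r - G p cs' r by rewrite /d G_sub.
  have e1 : E m r + ps r * lam m * (c r + G p (E m) r - E m r) - cs' r =
     (1 - ps r * lam m) * d r + ps r * lam m * G p d r.
    by rewrite hG /d /= (hfix r); ring.
  rewrite e1.
  set B := `|kappa - 1| * pi m.
  have B0 : 0 <= B by apply: mulr_ge0.
  have hd : forall t, `|d t| <= B * cs' t := IH.
  have hGd : `|G p d r| <= B * (cs' r - c r).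
    apply: le_trans (G_mono hp r hd) _.
    rewrite G_scale (_ : G p cs' r = cs' r - c r) //.
    by rewrite [in RHS](hfix r); ring.
  apply: le_trans (ler_normD _ _) _.
  have hx2 : 0 <= 1 - ps r * lam m by rewrite subr_ge0.
  rewrite (normrM (1 - _)) (normrM (ps r * lam m)) (ger0_norm hx0) (ger0_norm hx2).
  rewrite piS mulrA -/B.
  have h1 := ler_wpM2l hx2 (hd r).
  have h2 := ler_wpM2l hx0 hGd.
  have h3 : 0 <= (ps r - pmin) * lam m * B * c r.
    apply: mulr_ge0; last exact: ltW (hc r).
    by apply: mulr_ge0 => //; apply: mulr_ge0 => //; rewrite subr_ge0.
  have h4 : 0 <= pmin * lam m * B * (c r - eps * cs' r).
    apply: mulr_ge0; last by rewrite subr_ge0.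
    by apply: mulr_ge0 => //; apply: mulr_ge0 => //; exact: ltW.
  rewrite /a; nra.
apply/cvgrPdist_lt => e he.
set K := `|kappa - 1| * cs' q.
have K0 : 0 <= K by apply: mulr_ge0.
near=> n.
have hn : K / (a * e) <= \sum_(0 <= k < n) lam k by near: n; exact: cvgry_ge.
rewrite distrC -/(cs' q) -/(E n q).
have hb := bound n q; have hpi := pis n; have hpi0 := pi0 n.
move: hn hb hpi hpi0; set s := \sum_(0 <= k < n) lam k => hn hb hpi hpi0.
have hae : 0 < a * e by apply: mulr_gt0.
move: hn; rewrite ler_pdivrMr // => hn.
have hKp : K * pi n < e.
  rewrite ltNge; apply/negP => h.
  have hh : 0 <= (K * pi n - e) * (1 + a * s).
    apply: mulr_ge0; first by rewrite subr_ge0.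
    by apply: addr_ge0 => //; apply: mulr_ge0; [exact: ltW|exact: s0].
  have : K * (pi n * (1 + a * s)) <= K by rewrite ler_piMr.
  nra.
apply: le_lt_trans hKp; apply: le_trans hb _; rewrite /K; nra.
Unshelve. all: end_near.
Qed.
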